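(* Let $Q$ be a finite connected quandle, $S$ a set, $\theta:Q\times Q\to\mathrm{Sym}_S$ a quandle cocycle and $E=Q\times_\theta S$. The following are equivalent: (i) $\theta$ is cohomologous to the trivial cocycle $\mathbf{1}$; (ii) $|u^{\mathrm{LMlt}(E)}|=|Q|$ for every $u\in E$; (iii) $Q\times_\theta S\cong Q\times_{\mathbf{1}}S$ as quandles.
   Context: A quandle is a set $Q$ with a binary operation $*$ such that every left translation $L_x:y\mapsto x*y$ is bijective, $x*(y*z)=(x*y)*(x*z)$ and $x*x=x$. $\mathrm{LMlt}(Q)=\langle L_x:x\in Q\rangle$; $Q$ is connected if $\mathrm{LMlt}(Q)$ is transitive; $u^{\mathrm{LMlt}(E)}$ denotes the orbit of $u$. A quandle cocycle with values in $\mathrm{Sym}_S$ is $\theta:Q\times Q\to\mathrm{Sym}_S$ with $\theta_{x*y,x*z}\theta_{x,z}=\theta_{x,y*z}\theta_{y,z}$ and $\theta_{x,x}=1$; $\theta$ is cohomologous to the trivial cocycle $\mathbf{1}$ (constantly the identity) if there is $\gamma:Q\to\mathrm{Sym}_S$ with $\theta_{x,y}=\gamma_{x*y}\gamma_y^{-1}$ for all $x,y$. $Q\times_\theta S$ is the quandle on $Q\times S$ with $(x,a)*(y,b)=(x*y,\theta_{x,y}(b))$; in particular $Q\times_{\mathbf{1}}S$ is $(x,a)*(y,b)=(x*y,b)$. *)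

(* Defs.v *)
From mathcomp Require Import all_boot.
Set Implicit Arguments. Unset Strict Implicit. Unset Printing Implicit Defensive.

Definition is_quandle (T : Type) (op : T -> T -> T) : Prop :=
  [/\ forall x, bijective (op x),
      forall x y z, op x (op y z) = op (op x y) (op x z)
    & forall x, op x x = x].

(* Orbit of u under LMlt = < L_x : x in T >: the points reachable from u by
   applying left translations L_x and their inverses L_x^{-1}
   (v is reached via L_x^{-1} from op x v). *)
Inductive lmlt_orbit (T : Type) (op : T -> T -> T) (u : T) : T -> Prop :=
  | lo_refl : lmlt_orbit op u u
  | lo_L : forall x v, lmlt_orbit op u v -> lmlt_orbit op u (op x v)
  | lo_Linv : forall x v, lmlt_orbit op u (op x v) -> lmlt_orbit op u v.

Definition connected (T : Type) (op : T -> T -> T) : Prop :=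
  forall x y, lmlt_orbit op x y.

Definition quandle_cocycle (Q S : Type) (op : Q -> Q -> Q)
  (theta : Q -> Q -> S -> S) : Prop :=
  [/\ forall x y, bijective (theta x y),
      forall x y z s, theta (op x y) (op x z) (theta x z s)
                      = theta x (op y z) (theta y z s)
    & forall x s, theta x x s = s].

Definition cohomologous_to_trivial (Q S : Type) (op : Q -> Q -> Q)
  (theta : Q -> Q -> S -> S) : Prop :=
  exists (gamma gammainv : Q -> S -> S),
    [/\ forall y, cancel (gamma y) (gammainv y),
        forall y, cancel (gammainv y) (gamma y)
      & forall x y s, theta x y s = gamma (op x y) (gammainv y s)].

Definition ext_op (Q S : Type) (op : Q -> Q -> Q) (theta : Q -> Q -> S -> S)
  (a b : Q * S) : Q * S :=
  (op a.1 b.1, theta a.1 b.1 b.2).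

Definition triv_cocycle (Q S : Type) : Q -> Q -> S -> S := fun _ _ s => s.

Definition quandle_iso (T U : Type) (opT : T -> T -> T) (opU : U -> U -> U) : Prop :=
  exists f : T -> U, bijective f /\ forall a b, f (opT a b) = opU (f a) (f b).

(* Main.v *)
Require Import Defs.
From mathcomp Require Import all_boot.
From Stdlib Require Import ClassicalEpsilon.

Section Orb.
Variables (T : Type) (op : T -> T -> T).
Lemma orb_trans u v w : lmlt_orbit op u v -> lmlt_orbit op v w -> lmlt_orbit op u w.
Proof.
move=> Huv; elim=> [|x w' _ IH|x w' _ IH]; first exact: Huv.
- exact: (lo_L x IH).
- exact: (lo_Linv IH).
Qed.
End Orb.

Lemma orb_hom (T U : Type) (opT : T -> T -> T) (opU : U -> U -> U) (f : T -> U) :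
  (forall a b, f (opT a b) = opU (f a) (f b)) ->
  forall u v, lmlt_orbit opT u v -> lmlt_orbit opU (f u) (f v).
Proof.
move=> Hf u v; elim=> [|x w _ IH|x w _ IH]; first exact: lo_refl.
- rewrite Hf; exact: lo_L.
- rewrite Hf in IH; exact: lo_Linv IH.
Qed.

Lemma i_iii (Q S : Type) op (theta : Q -> Q -> S -> S) :
  cohomologous_to_trivial op theta ->
  quandle_iso (ext_op op theta) (ext_op op (@triv_cocycle Q S)).
Proof.
case=> g [gi [K1 K2 H]]; exists (fun p => (p.1, gi p.1 p.2)); split.
- by exists (fun p => (p.1, g p.1 p.2)) => [[x s]|[x s]] /=; rewrite ?K1 ?K2.
- by move=> [x a] [y b]; rewrite /ext_op /triv_cocycle /= H K1.
Qed.

Lemma triv_orb (Q S : Type) op (u v : Q * S) :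
  lmlt_orbit (ext_op op (@triv_cocycle Q S)) u v -> v.2 = u.2.
Proof. by elim=> [|x w _ IH|x w _ IH] //. Qed.

Lemma triv_orb2 (Q S : Type) op (x y : Q) (b : S) :
  lmlt_orbit op x y -> lmlt_orbit (ext_op op (@triv_cocycle Q S)) (x, b) (y, b).
Proof.
elim=> [|z w _ IH|z w _ IH]; first exact: lo_refl.
- exact: (lo_L (z, b) IH).
- exact: (@lo_Linv _ _ _ (z, b) (w, b) IH).
Qed.

Lemma iii_ii (Q S : Type) op (theta : Q -> Q -> S -> S) :
  connected op ->
  quandle_iso (ext_op op theta) (ext_op op (@triv_cocycle Q S)) ->
  forall u : Q * S, exists f : Q -> Q * S,
         injective f /\
         (forall v, lmlt_orbit (ext_op op theta) u v <-> exists x, f x = v).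
Proof.
move=> Hc [f [[g fg gf] Hf]] u.
have Hg : forall a b, g (ext_op op (@triv_cocycle Q S) a b)
                      = ext_op op theta (g a) (g b).
  by move=> a b; rewrite -{1}(gf a) -{1}(gf b) -Hf fg.
exists (fun x => g (x, (f u).2)); split.
- by move=> x y /(can_inj gf) [].
- move=> v; split.
  + move=> /(@orb_hom _ _ _ _ _ Hf) /triv_orb H; exists (f v).1.
    by rewrite -H -surjective_pairing fg.
  + case=> x <-.
    apply: (@orb_trans _ _ _ (g (f u))); first by rewrite fg; apply: lo_refl.
    apply: (@orb_hom _ _ _ _ _ Hg); rewrite {1}[f u]surjective_pairing.
    by apply: triv_orb2; apply: Hc.
Qed.

Lemma surj_inj_fin (Q : finType) (g : Q -> Q) :
  (forall y, exists x, g x = y) -> injective g.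
Proof.
move=> Hs.
have Hc : #|image g Q| == #|Q|.
  apply/eqP; apply: eq_card => y; rewrite !inE.
  by case: (Hs y) => x <-; rewrite (image_f g) //.
move/image_injP: Hc => H x y; apply: H; by [].
Qed.

Lemma ii_i (Q : finType) (S : Type) op (theta : Q -> Q -> S -> S) :
  connected op -> quandle_cocycle op theta ->
  (forall u : Q * S, exists f : Q -> Q * S,
         injective f /\
         (forall v, lmlt_orbit (ext_op op theta) u v <-> exists x, f x = v)) ->
  cohomologous_to_trivial op theta.
Proof.
move=> Hc [Hbij Hcoc Hid] Hii.
set E := ext_op op theta.
have proj : forall (u : Q * S) y, exists t, lmlt_orbit E u (y, t).
  move=> [x0 a] y; elim: (Hc x0 y) => [|x v _ [t IH]|x v _ [t IH]].
  - by exists a; exact: lo_refl.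
  - by exists (theta x v t); exact: (lo_L (x, a) IH).
  - case: (Hbij x v) => ti K1 K2; exists (ti t).
    apply: (lo_Linv (x:=(x, a))); rewrite /E /ext_op /= K2; exact: IH.
have uniq : forall u y t1 t2, lmlt_orbit E u (y, t1) -> lmlt_orbit E u (y, t2) ->
    t1 = t2.
  move=> u y t1 t2 H1 H2; case: (Hii u) => f [finj Hf].
  have inj : injective (fun x => (f x).1).
    apply: surj_inj_fin => z; case: (proj u z) => t /Hf [x Hx].
    by exists x; rewrite Hx.
  case/Hf: H1 => x1 E1; case/Hf: H2 => x2 E2.
  have ex : x1 = x2 by apply: inj; rewrite /= E1 E2.
  by move: E1 E2; rewrite ex => -> [].
pose G u y := proj1_sig (constructive_indefinite_description _ (proj u y)).
have HG : forall u y, lmlt_orbit E u (y, G u y).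
  by move=> u y; exact: (proj2_sig (constructive_indefinite_description _ (proj u y))).
have sym : forall u v, lmlt_orbit E u v -> lmlt_orbit E v u.
  move=> u v; elim=> [|x v' _ IH|x v' _ IH]; first exact: lo_refl.
  - apply: orb_trans IH; apply: (lo_Linv (x:=x)); exact: lo_refl.
  - apply: orb_trans IH; apply: lo_L; exact: lo_refl.
case: (pickP (@predT Q)) => [q0 _|Hn]; last first.
  exists (fun _ s => s), (fun _ s => s); split=> // x.
  by have := Hn x.
exists (fun y s => G (q0, s) y), (fun y b => G (y, b) q0); split.
- move=> y s /=.
  apply: (uniq (q0, s) q0); last exact: lo_refl.
  apply: orb_trans (HG _ _) _; exact: HG.
- move=> y b /=; symmetry.
  apply: (uniq (y, b) y); first exact: lo_refl.
  apply: orb_trans (HG _ _) _; exact: HG.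
- move=> x y s.
  apply: (uniq (y, s) (op x y)).
    apply: (@lo_L _ _ _ (x, s) (y, s)); exact: lo_refl.
  apply: orb_trans (HG _ _) _; exact: HG.
Qed.

Theorem corollary2p4 (Q : finType) (S : Type) (op : Q -> Q -> Q)
  (theta : Q -> Q -> S -> S) :
  is_quandle op -> connected op -> quandle_cocycle op theta ->
  [<-> cohomologous_to_trivial op theta;
       (* |u^LMlt(E)| = |Q| for all u in E: the orbit is in bijection with Q *)
       forall u : Q * S, exists f : Q -> Q * S,
         injective f /\
         (forall v, lmlt_orbit (ext_op op theta) u v <-> exists x, f x = v);
       quandle_iso (ext_op op theta) (ext_op op (@triv_cocycle Q S))].
Proof.
move=> _ Hc Hcoc; tfae.
- by move=> H; apply: iii_ii => //; apply: i_iii.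
- by move=> H; apply: i_iii; apply: ii_i.
- by move=> H; apply: ii_i => //; apply: iii_ii.
Qed.
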